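(* For every positive integer $n$, the uniqueness property fails for the triple graph $\mathcal{T}_n$: there exist two vertices of $\mathcal{T}_n$ whose triples of integers have the same largest element but are not equal (not even up to permutation of their entries). More precisely, for every $j\ge 1$ the graph $\mathcal{T}_n$ contains vertices labelled \[ \Big(\breve K(S_n(0)),\ \breve K\big(S_n(0)^{5j+1}S_n(1)\big),\ \breve K\big(S_n(0)^{5j}S_n(1)\big)\Big) \quad\text{and}\quad \Big(\breve K\big(S_n(0)S_n(1)^{3j}\big),\ \breve K\big(S_n(0)S_n(1)^{3j+1}\big),\ \breve K(S_n(1))\Big), \] these two triples have equal largest element, and they are distinct triples.
   Context: For finite sequences of positive integers $\alpha=(a_1,\dots,a_k)$, $\beta=(b_1,\dots,b_m)$, the concatenation is $\alpha\beta=\alpha\oplus\beta=(a_1,\dots,a_k,b_1,\dots,b_m)$, and $\alpha^k$ denotes the concatenation of $k$ copies of $\alpha$. The continued fraction $[a_1;a_2:\dots:a_k]$ means $a_1+\cfrac{1}{a_2+\cfrac{1}{\ddots+\cfrac{1}{a_k}}}$. For a sequence $(a_1,\dots,a_k)$ of positive integers with $k\ge2$, the integer sine $\breve K(a_1,\dots,a_k)$ is the integer $c$ where $[a_1;a_2:\dots:a_{k-1}]=c/d$ with $\gcd(c,d)=1$, $c,d>0$ (note the last entry $a_k$ is omitted). On triples $(\alpha,\gamma,\beta)$ of finite sequences define $\mathcal L(\alpha,\gamma,\beta)=(\alpha,\alpha\gamma,\gamma)$ and $\mathcal R(\alpha,\gamma,\beta)=(\gamma,\gamma\beta,\beta)$.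 The graph $\mathcal G(\alpha,\beta)$ is the binary graph with root $(\alpha,\alpha\beta,\beta)$ whose vertices are all triples obtained from the root by finitely many applications of $\mathcal L,\mathcal R$, with an edge $(v,w)$ whenever $w=\mathcal L(v)$ or $w=\mathcal R(v)$. The triple graph of integers $X(\mathcal G(\alpha,\beta))$ is obtained by replacing each vertex $(\alpha',\gamma',\beta')$ by the integer triple $\chi(\alpha',\gamma',\beta')=(\breve K(\alpha'),\breve K(\gamma'),\breve K(\beta'))$ (and each edge $(v,w)$ by $(\chi(v),\chi(w))$). For a positive integer $n$ let $a_n=n^2+3$, $b_n=n^4+5n^2+5$, $S_n(0)=(na_n,na_n)$, $S_n(1)=(nb_n,nb_n)$, and $\mathcal T_n=X(\mathcal G(S_n(0),S_n(1)))$. *)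

(* Defs.v *)
From mathcomp Require Import all_boot all_order all_algebra.
Set Implicit Arguments. Unset Strict Implicit. Unset Printing Implicit Defensive.
Import GRing.Theory Num.Theory.
Local Open Scope ring_scope.

(* Finite sequences of positive integers are represented as [seq nat]. *)

Fixpoint cfrac (a : nat) (s : seq nat) : rat :=
  match s with
  | [::] => a%:R
  | b :: s' => a%:R + (cfrac b s')^-1
  end.

(* Integer sine: for (a_1,...,a_k), k >= 2, the numerator c of the reduced
   fraction [a_1; ...; a_{k-1}] = c/d (last entry omitted).  numq gives the
   reduced numerator (denominator positive); we take its absolute value,
   which is the numerator itself as the value is positive.  Defaults to 0
   for k < 2 (never used). *)
Definition isine (s : seq nat) : nat :=
  match s with
  | a :: b :: t => `|numq (cfrac a (belast b t))|%N
  | _ => 0%N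
  end.

Definition seqpow (al : seq nat) (k : nat) : seq nat := flatten (nseq k al).

Definition triple := (seq nat * seq nat * seq nat)%type.

Definition opL (v : triple) : triple :=
  let: (al, ga, be) := v in (al, al ++ ga, ga).
Definition opR (v : triple) : triple :=
  let: (al, ga, be) := v in (ga, ga ++ be, be).

(* apply a word of moves (true = L, false = R), first letter first *)
Definition apply_moves (w : seq bool) (v : triple) : triple :=
  foldl (fun v b => if b then opL v else opR v) v w.

Definition is_vertex (al be : seq nat) (v : triple) : Prop :=
  exists w : seq bool, v = apply_moves w (al, al ++ be, be).

Definition chi (v : triple) : nat * nat * nat :=
  let: (al, ga, be) := v in (isine al, isine ga, isine be).

Definition is_label (al be : seq nat) (t : nat * nat * nat) : Prop :=
  exists v, is_vertex al be v /\ chi v = t.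

Definition max3 (t : nat * nat * nat) : nat :=
  let: (x, y, z) := t in maxn x (maxn y z).

Definition entries (t : nat * nat * nat) : seq nat :=
  let: (x, y, z) := t in [:: x; y; z].

Definition a_ (n : nat) : nat := (n ^ 2 + 3)%N.
Definition b_ (n : nat) : nat := (n ^ 4 + 5 * n ^ 2 + 5)%N.
Definition S0 (n : nat) : seq nat := [:: n * a_ n; n * a_ n]%N.
Definition S1 (n : nat) : seq nat := [:: n * b_ n; n * b_ n]%N.

(* Main.v *)
Require Import Defs.
From mathcomp Require Import all_boot all_order all_algebra.
From mathcomp Require Import ring zify.
Import GRing.Theory Num.Theory.
Local Open Scope ring_scope.

Definition act (a : nat) (v : nat * nat) : nat * nat := (a * v.1 + v.2, v.1)%N.
Definition KP (s : seq nat) := foldr act (1, 0)%N s.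
Definition K s := (KP s).1.
Definition pos (s : seq nat) := all (fun x => 0 < x)%N s.

Lemma K_pos s : pos s -> (0 < K s)%N.
Proof.
elim: s => [|a s IH] //= /andP [ha hs].
rewrite /K /=. have := IH hs. rewrite /K. nia.
Qed.

Lemma KP_cop s : coprime (KP s).1 (KP s).2.
Proof.
elim: s => [|a s IH] //=; rewrite /act /=.
by rewrite /coprime gcdnC gcdnMDl; exact: IH.
Qed.

Lemma cfrac_K a s : pos (a :: s) ->
  cfrac a s = ((K (a :: s))%:R / (K s)%:R)%R.
Proof.
elim: s a => [|b s IH] a /=.
  by move=> _; rewrite /K /= muln1 addn0 divr1.
move=> /andP [ha hs]. rewrite (IH _ hs).
have hb := @K_pos (b :: s) hs.
have hs' : pos s by case/andP: hs.
have hk := @K_pos s hs'.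
rewrite /K /= natrD natrM.
rewrite /K /= in hb hk.
have h1 : ((b * (KP s).1 + (KP s).2)%N%:R : rat) != 0 by rewrite pnatr_eq0 -lt0n.
have h2 : (((KP s).1)%:R : rat) != 0 by rewrite pnatr_eq0 -lt0n.
rewrite invf_div. field. by rewrite natrD natrM in h1; rewrite h1.
Qed.

Lemma numq_K a s : pos (a :: s) -> `|numq (cfrac a s)|%N = K (a :: s).
Proof.
move=> h. rewrite cfrac_K //.
have hk : (0 < K s)%N by apply: K_pos; case/andP: h.
have -> : ((K (a :: s))%:R / (K s)%:R : rat) = (Posz (K (a::s)))%:~R / (Posz (K s))%:~R by [].
rewrite coprimeq_num.
  by rewrite gtr0_sg ?mul1r //; rewrite ltz_nat.
by have := KP_cop (a :: s).
Qed.

Lemma isine_def a b t : isine (a :: b :: t) = `|numq (cfrac a (belast b t))|%N.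
Proof. by []. Qed.

Lemma isine_rcons l x : l != [::] -> pos l -> isine (rcons l x) = K l.
Proof.
case: l => [|a l] // _ h.
case: l h => [|c l] h.
  by rewrite (_ : rcons [:: a] x = [:: a; x]) // isine_def (_ : belast x [::] = [::]) // numq_K.
by rewrite (_ : rcons [:: a, c & l] x = [:: a, c & rcons l x]) // isine_def belast_rcons numq_K.
Qed.

Lemma isine_cat2 l q : pos (l ++ [:: q]) -> isine (l ++ [:: q; q]) = K (l ++ [:: q]).
Proof.
move=> h. have -> : l ++ [:: q; q] = rcons (l ++ [:: q]) q by rewrite -cats1 -catA.
apply: isine_rcons => //. by case: l {h}.
Qed.

Lemma seqpowS s k : seqpow s k.+1 = s ++ seqpow s k.
Proof. by []. Qed.

Lemma seqpowSr s k : seqpow s k.+1 = seqpow s k ++ s.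
Proof.
elim: k => [|k IH]; first by rewrite /seqpow /= cats0.
by rewrite [LHS]seqpowS [in LHS]IH catA -seqpowS.
Qed.

Lemma pos_cat u v : pos (u ++ v) = pos u && pos v.
Proof. by rewrite /pos all_cat. Qed.

Lemma pos_seqpow s k : pos s -> pos (seqpow s k).
Proof. move=> h; elim: k => [|k IH] //. by rewrite seqpowS pos_cat h IH. Qed.

Lemma KP_cat u w : KP (u ++ w) = foldr act (KP w) u.
Proof. by rewrite /KP foldr_cat. Qed.

Definition good (v : nat * nat) := (v.2 <= v.1)%N.

Lemma KP_good w : pos w -> good (KP w).
Proof.
case: w => [|a w] //= /andP [ha _]. rewrite /good /=. nia.
Qed.

Lemma fold_ge v u : good v -> pos u ->
  good (foldr act v u) /\ (v.1 <= (foldr act v u).1)%N /\ (v.2 <= (foldr act v u).2)%N.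
Proof.
elim: u => [|a u IH] /=; first by move=> g _; rewrite !leqnn.
move=> g /andP [ha hu]. have [g' [h1 h2]] := IH g hu.
move: g' h1 h2. rewrite /good /act /=.
case: (foldr act v u) => x y /=. move: g; rewrite /good. nia.
Qed.

Lemma fold_mono u (v v' : nat * nat) : (v.1 <= v'.1)%N -> (v.2 <= v'.2)%N ->
  ((foldr act v u).1 <= (foldr act v' u).1)%N /\ ((foldr act v u).2 <= (foldr act v' u).2)%N.
Proof.
elim: u => [|a u IH] //= h1 h2. have [i1 i2] := IH h1 h2.
move: i1 i2. rewrite /act /=. nia.
Qed.

Lemma K_cat_ge u w : pos u -> pos w -> (K w <= K (u ++ w))%N.
Proof.
move=> hu hw. rewrite /K KP_cat. by have [_ [h _]] := fold_ge (KP w) u (KP_good w hw) hu.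
Qed.

Lemma K_cons_gt a b s : (0 < a)%N -> pos (b :: s) -> (a < K (a :: b :: s))%N.
Proof.
move=> ha h. have h1 := K_pos (b :: s) h. have h2 : (0 < K s)%N by apply: K_pos; case/andP: h.
move: h1 h2. rewrite /K /=. nia.
Qed.

Lemma K_insert u v w : pos v -> pos w ->
  (K (u ++ w) <= K (u ++ v ++ w))%N.
Proof.
move=> hv hw. rewrite /K !KP_cat.
have [_ [h1 h2]] := fold_ge (KP w) v (KP_good w hw) hv.
by have [] := fold_mono u _ _ h1 h2.
Qed.

Definition mat := (int * int * int * int)%type.
Definition mapp (m : mat) (v : int * int) : int * int :=
  let: (a, b, c, d) := m in (a * v.1 + b * v.2, c * v.1 + d * v.2).
Definition mmul (m1 m2 : mat) : mat :=
  let: (a, b, c, d) := m1 in let: (e, f, g, h) := m2 in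
  (a * e + b * g, a * f + b * h, c * e + d * g, c * f + d * h).
Definition det (m : mat) := let: (a, b, c, d) := m in a * d - b * c.
Definition tr (m : mat) := let: (a, b, c, d) := m in a + d.
Definition Am (a : int) : mat := (a * a + 1, a, a, 1).
Definition pow5 m := mmul m (mmul m (mmul m (mmul m m))).
Definition pow3 m := mmul m (mmul m m).

Lemma mapp_mul m1 m2 w : mapp (mmul m1 m2) w = mapp m1 (mapp m2 w).
Proof.
case: m1 => [[[a b] c] d]; case: m2 => [[[e f] g] h]; case: w => x y /=.
congr pair; ring.
Qed.

Lemma det_mul m1 m2 : det (mmul m1 m2) = det m1 * det m2.
Proof.
case: m1 => [[[a b] c] d]; case: m2 => [[[e f] g] h] /=. ring.
Qed.

Lemma det_Am a : det (Am a) = 1.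
Proof. rewrite /=. ring. Qed.

Lemma CH (M C : mat) w : det C = 1 ->
  (mapp M (mapp C (mapp C w))).1 = tr C * (mapp M (mapp C w)).1 - (mapp M w).1.
Proof.
case: M => [[[al be] c0] d0]; case: C => [[[a b] c] d]; case: w => x y /= h.
apply/eqP; rewrite -subr_eq0; apply/eqP.
transitivity ((1 - (a * d - b * c)) * (al * x + be * y)); first ring.
by rewrite h subrr mul0r.
Qed.

Lemma rec_eq (M C D : mat) v : det C = 1 -> det D = 1 -> tr C = tr D ->
  (mapp M (mapp C v)).1 = (mapp M (mapp D v)).1 ->
  forall k, (mapp M (iter k (mapp C) v)).1 = (mapp M (iter k (mapp D) v)).1.
Proof.
move=> hC hD ht h1.
suff H : forall k, (mapp M (iter k (mapp C) v)).1 = (mapp M (iter k (mapp D) v)).1 /\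
  (mapp M (iter k.+1 (mapp C) v)).1 = (mapp M (iter k.+1 (mapp D) v)).1.
  by move=> k; case: (H k).
elim=> [|k [IH1 IH2]]; first by split.
split=> //.
rewrite !iterS CH // CH // -!iterS -IH2 -IH1 ht //.
Qed.

Definition actz (a : nat) (v : int * int) : int * int := (a%:Z * v.1 + v.2, v.1).
Definition lift (v : nat * nat) : int * int := (v.1%:Z, v.2%:Z).

Lemma lift_fold s w : lift (foldr act w s) = foldr actz (lift w) s.
Proof. elim: s => [|a s IH] //=. by rewrite -IH /lift /act /actz /=. Qed.

Lemma fold_seqpow a k w : foldr actz w (seqpow [:: a; a] k) = iter k (mapp (Am a%:Z)) w.
Proof.
elim: k => [|k IH] //. rewrite seqpowS foldr_cat IH iterS.
case: (iter k _ w) => x y. rewrite /= /actz /=. congr pair; ring.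
Qed.

Lemma iter_mul (T : Type) (f : T -> T) j m x : iter (j * m) f x = iter j (iter m f) x.
Proof. elim: j => [|j IH] //. by rewrite mulSn iterD IH. Qed.

Lemma tr_eq (n : int) : tr (pow5 (Am (n * (n^+2 + 3)))) = tr (pow3 (Am (n * (n^+4 + 5 * n^+2 + 5)))).
Proof. rewrite /=. ring. Qed.

Lemma phi_eq (n : int) : let A := Am (n * (n^+2 + 3)) in let q := n * (n^+4 + 5 * n^+2 + 5) in
  (mapp A (mapp (pow5 A) (q, 1))).1 = (mapp A (mapp (pow3 (Am q)) (q, 1))).1.
Proof. rewrite /=. ring. Qed.

Lemma det_pow5 m : det m = 1 -> det (pow5 m) = 1.
Proof. move=> h; by rewrite /pow5 !det_mul h !mul1r. Qed.
Lemma det_pow3 m : det m = 1 -> det (pow3 m) = 1.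
Proof. move=> h; by rewrite /pow3 !det_mul h !mul1r. Qed.

Lemma key n j :
  K (seqpow (S0 n) (5 * j).+1 ++ [:: n * b_ n]%N) =
  K (S0 n ++ seqpow (S1 n) (3 * j) ++ [:: n * b_ n]%N).
Proof.
set p := (n * a_ n)%N. set q := (n * b_ n)%N.
apply/eqP; rewrite -eqz_nat; apply/eqP.
have E : forall s, (K s)%:Z = (lift (KP s)).1 by [].
rewrite !E !KP_cat !lift_fold.
rewrite /S0 /S1 -/p -/q !fold_seqpow.
rewrite (_ : [:: p; p] = seqpow [:: p; p] 1); last by [].
rewrite fold_seqpow (iterS (5 * j)) (_ : forall f (x : int * int), iter 1 f x = f x) //.
set v0 := foldr actz (lift (1%N, 0%N)) [:: q].
rewrite mulnC iter_mul mulnC iter_mul.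
rewrite (eq_iter (f := iter 5 (mapp (Am p%:Z))) (f' := mapp (pow5 (Am p%:Z)))); last by move=> w; rewrite /pow5 !mapp_mul.
rewrite (eq_iter (f := iter 3 (mapp (Am q%:Z))) (f' := mapp (pow3 (Am q%:Z)))); last by move=> w; rewrite /pow3 !mapp_mul.
have hp : p%:Z = n%:Z * (n%:Z ^+ 2 + 3) by rewrite /p /a_ -!natz !(natrD, natrM, natrX).
have hq : q%:Z = n%:Z * (n%:Z ^+ 4 + 5 * n%:Z ^+ 2 + 5)
  by rewrite /q /b_ -!natz !(natrD, natrM, natrX).
apply: rec_eq.
- by rewrite det_pow5 // det_Am.
- by rewrite det_pow3 // det_Am.
- by rewrite hp hq tr_eq.
- have -> : v0 = (q%:Z, 1) by rewrite /v0 /lift /actz /= mulr1 addr0.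
  by rewrite hp hq phi_eq.
Qed.


Lemma movesL al be k m :
  apply_moves (nseq k true) (al, seqpow al m.+1 ++ be, seqpow al m ++ be) =
  (al, seqpow al (m + k).+1 ++ be, seqpow al (m + k) ++ be).
Proof.
elim: k m => [|k IH] m; first by rewrite addn0.
have -> : apply_moves (nseq k.+1 true) (al, seqpow al m.+1 ++ be, seqpow al m ++ be)
  = apply_moves (nseq k true) (al, seqpow al m.+2 ++ be, seqpow al m.+1 ++ be).
  by rewrite [seqpow al m.+2]seqpowS -catA.
by rewrite IH addSnnS.
Qed.

Lemma movesR al be k m :
  apply_moves (nseq k false) (al ++ seqpow be m, al ++ seqpow be m.+1, be) =
  (al ++ seqpow be (m + k), al ++ seqpow be (m + k).+1, be).
Proof.
elim: k m => [|k IH] m; first by rewrite addn0.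
have -> : apply_moves (nseq k.+1 false) (al ++ seqpow be m, al ++ seqpow be m.+1, be)
  = apply_moves (nseq k false) (al ++ seqpow be m.+1, al ++ seqpow be m.+2, be).
  by rewrite [seqpow be m.+2]seqpowSr catA.
by rewrite IH addSnnS.
Qed.

Lemma label1 al be k : is_label al be
  (isine al, isine (seqpow al (k + 1) ++ be), isine (seqpow al k ++ be)).
Proof.
exists (al, seqpow al (k + 1) ++ be, seqpow al k ++ be); split => //.
exists (nseq k true).
have -> : (al, al ++ be, be) = (al, seqpow al 1 ++ be, seqpow al 0 ++ be)
  by rewrite /seqpow /= cats0.
by rewrite movesL add0n addn1.
Qed.

Lemma label2 al be k : is_label al be
  (isine (al ++ seqpow be k), isine (al ++ seqpow be (k + 1)), isine be).
Proof.
exists (al ++ seqpow be k, al ++ seqpow be (k + 1), be); split => //.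
exists (nseq k false).
have -> : (al, al ++ be, be) = (al ++ seqpow be 0, al ++ seqpow be 1, be)
  by rewrite /seqpow /= !cats0.
by rewrite movesR add0n addn1.
Qed.

Theorem theorem1 (n j : nat) (hn : (0 < n)%N) (hj : (1 <= j)%N) :
  let t1 := (isine (S0 n),
             isine (seqpow (S0 n) (5 * j + 1) ++ S1 n),
             isine (seqpow (S0 n) (5 * j) ++ S1 n)) in
  let t2 := (isine (S0 n ++ seqpow (S1 n) (3 * j)),
             isine (S0 n ++ seqpow (S1 n) (3 * j + 1)),
             isine (S1 n)) in
  [/\ is_label (S0 n) (S1 n) t1,
      is_label (S0 n) (S1 n) t2,
      max3 t1 = max3 t2,
      t1 <> t2
    & ~ perm_eq (entries t1) (entries t2)].
Proof.
move=> t1 t2.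
set p := (n * a_ n)%N. set q := (n * b_ n)%N.
have hp : (0 < p)%N by rewrite /p muln_gt0 hn /a_ addn_gt0 orbT.
have hq : (0 < q)%N by rewrite /q muln_gt0 hn /b_ addn_gt0 orbT.
have hpq : (p < q)%N.
  rewrite /p /q ltn_pmul2l // /a_ /b_.
  lia.
have e0 : S0 n = [:: p; p] by [].
have e1 : S1 n = [:: q; q] by [].
have ps0 : pos (S0 n) by rewrite e0 /pos /= hp.
have ps1 : pos (S1 n) by rewrite e1 /pos /= hq.
have pq : pos [:: q] by rewrite /pos /= hq.
have [k hk] : exists k, (3 * j = k.+1)%N by exists (3 * j).-1; lia.
have L1 : is_label (S0 n) (S1 n) t1 by apply: label1.
have L2 : is_label (S0 n) (S1 n) t2 by apply: label2.
have v1 : isine (S0 n) = p.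
  by rewrite e0 (_ : [:: p; p] = [::] ++ [:: p; p]) // isine_cat2 //; rewrite /K /KP /act /=; lia.
have vq : isine (S1 n) = q.
  by rewrite e1 (_ : [:: q; q] = [::] ++ [:: q; q]) // isine_cat2 //; rewrite /K /KP /act /=; lia.
have vX : isine (seqpow (S0 n) (5 * j + 1) ++ S1 n) = K (seqpow (S0 n) (5 * j).+1 ++ [:: q]).
  by rewrite addn1 e1 isine_cat2 // pos_cat pos_seqpow.
have vY : isine (seqpow (S0 n) (5 * j) ++ S1 n) = K (seqpow (S0 n) (5 * j) ++ [:: q]).
  by rewrite e1 isine_cat2 // pos_cat pos_seqpow.
have vZ : isine (S0 n ++ seqpow (S1 n) (3 * j)) = K (S0 n ++ seqpow (S1 n) k ++ [:: q]).
  rewrite hk seqpowSr {2}e1 catA isine_cat2 -?catA //.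
  by rewrite !pos_cat ps0 pos_seqpow.
have vX2 : isine (S0 n ++ seqpow (S1 n) (3 * j + 1)) = K (S0 n ++ seqpow (S1 n) (3 * j) ++ [:: q]).
  rewrite addn1 seqpowSr {2}e1 catA isine_cat2 -?catA //.
  by rewrite !pos_cat ps0 pos_seqpow.
have kX := key n j. rewrite -/q in kX.
set X := K (seqpow (S0 n) (5 * j).+1 ++ [:: q]).
set Y := K (seqpow (S0 n) (5 * j) ++ [:: q]).
set Z := K (S0 n ++ seqpow (S1 n) k ++ [:: q]).
have pX : (p < X)%N.
  rewrite /X seqpowS e0 /=. apply: K_cons_gt => //.
  by rewrite /pos /= hp /= -/(pos _) pos_cat pos_seqpow // -e0.
have YX : (Y <= X)%N.
  rewrite /X seqpowS -catA. apply: K_cat_ge => //.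
  by rewrite pos_cat pos_seqpow.
have pZ : (p < Z)%N.
  rewrite /Z e0 /=. apply: K_cons_gt => //.
  by rewrite /pos /= hp /= -/(pos _) pos_cat pos_seqpow.
have ZX : (Z <= X)%N.
  rewrite /X kX /Z hk seqpowS -catA. apply: K_insert => //.
  by rewrite pos_cat pos_seqpow.
have qX : (q <= X)%N.
  have -> : q = K [:: q] by rewrite /K /= muln1 addn0.
  rewrite /X; apply: K_cat_ge => //. exact: pos_seqpow.
have T1 : t1 = (p, X, Y) by rewrite /t1 v1 vX vY.
have T2 : t2 = (Z, X, q) by rewrite /t2 vZ vX2 vq /X kX.
split => //.
- by rewrite T1 T2 /max3; lia.
- rewrite T1 T2 => E. have := congr1 (fun t : nat * nat * nat => t.1.1) E. rewrite /= => E'. by rewrite E' ltnn in pZ.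
- rewrite T1 T2 /entries => /perm_mem /(_ p); rewrite !inE eqxx /= => /esym.
  move/orP => [/eqP|/orP [/eqP|/eqP]]; lia.
Qed.
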